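(* Let $X$ be a normal ballean and $f:X\to Y$ an open macro-uniform map onto a ballean $Y$ that admits a bornologous section $s:Y\to X$ (i.e. $f(s(y))=y$ for all $y\in Y$). Then $Y$ is normal.
   Context: A ballean is a pair $(X,\mathcal E_X)$ where $X$ is a set and $\mathcal E_X$ is a family of subsets of $X\times X$ (entourages) such that: each $E\in\mathcal E_X$ contains the diagonal; for any $E,F\in\mathcal E_X$ there is $D\in\mathcal E_X$ with $E\circ F^{-1}\subset D$; and $\bigcup\mathcal E_X=X\times X$. For $E\in\mathcal E_X$, $x\in X$, $A\subset X$: $E[x]=\{y:(x,y)\in E\}$, $E[A]=\bigcup_{a\in A}E[a]$. $B\subset X$ is bounded if $B\subset E[x]$ for some $E\in\mathcal E_X$, $x\in X$; $\mathcal B_X$ is the family of bounded sets. Sets $A,B$ are asymptotically disjoint if $E[A]\cap E[B]\in\mathcal B_X$ for all $E\in\mathcal E_X$; $U$ is an asymptotic neighborhood of $A$ if $E[A]\setminus U\in\mathcal B_X$ for all $E$; $X$ is normal if any two asymptotically disjoint sets have disjoint asymptotic neighborhoods. A map $f:X\to Y$ is macro-uniform if for every $E_X\in\mathcal E_X$ there is $E_Y\in\mathcal E_Y$ with $f(E_X[x])\subset E_Y[f(x)]$ for all $x\in X$; open if for every $E_Y\in\mathcal E_Y$ there is $E_X\in\mathcal E_X$ with $f(E_X[x])\supset E_Y[f(x)]$ for all $x\in X$. A map $s:Y\to X$ is bornologous if $s(B)$ is bounded in $X$ for every bounded $B\subset Y$. *)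

(* Defs.v *)
From Stdlib Require Import Classical.

Set Implicit Arguments.

Definition rel (X : Type) := X -> X -> Prop.

Definition rcomp (X : Type) (E F : rel X) : rel X :=
  fun x z => exists y, F x y /\ E y z.
Definition rinv (X : Type) (F : rel X) : rel X := fun x y => F y x.
Definition rsub (X : Type) (E F : rel X) : Prop := forall x y, E x y -> F x y.

Record ballean := Ballean {
  bcarrier :> Type;
  entourage : rel bcarrier -> Prop;
  ent_diag : forall E, entourage E -> forall x, E x x;
  ent_comp : forall E F, entourage E -> entourage F ->
      exists D, entourage D /\ rsub (rcomp E (rinv F)) D;
  ent_cover : forall x y : bcarrier, exists E, entourage E /\ E x y
}.

Definition ball (X : ballean) (E : rel X) (x : X) : X -> Prop := fun y => E x y.
Definition ballS (X : ballean) (E : rel X) (A : X -> Prop) : X -> Prop :=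
  fun y => exists a, A a /\ E a y.

Definition subset (X : Type) (A B : X -> Prop) : Prop := forall x, A x -> B x.

Definition bounded (X : ballean) (B : X -> Prop) : Prop :=
  exists E x, entourage X E /\ subset B (ball X E x).

Definition asym_disjoint (X : ballean) (A B : X -> Prop) : Prop :=
  forall E, entourage X E ->
    bounded X (fun y => ballS X E A y /\ ballS X E B y).

Definition asym_nbhd (X : ballean) (U A : X -> Prop) : Prop :=
  forall E, entourage X E -> bounded X (fun y => ballS X E A y /\ ~ U y).

Definition normal (X : ballean) : Prop :=
  forall A B : X -> Prop, asym_disjoint X A B ->
    exists U V : X -> Prop, asym_nbhd X U A /\ asym_nbhd X V B /\
      (forall x, ~ (U x /\ V x)).

Definition macro_uniform (X Y : ballean) (f : X -> Y) : Prop :=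
  forall EX, entourage X EX -> exists EY, entourage Y EY /\
    forall x y, EX x y -> EY (f x) (f y).

Definition open_map (X Y : ballean) (f : X -> Y) : Prop :=
  forall EY, entourage Y EY -> exists EX, entourage X EX /\
    forall x y', EY (f x) y' -> exists y, EX x y /\ f y = y'.

Definition bornologous (Y X : ballean) (s : Y -> X) : Prop :=
  forall B : Y -> Prop, bounded Y B -> bounded X (fun x => exists y, B y /\ s y = x).

(* Main.v *)
Require Import Defs.
From Stdlib Require Import Classical.

Lemma ent_inv (X : ballean) (E : rel X) : entourage X E ->
  exists D, entourage X D /\ forall x y, E x y -> D y x.
Proof.
  intros HE. destruct (ent_comp X E E HE HE) as [D [HD HsD]].
  exists D; split; auto. intros x y Hxy. apply HsD. exists x. split; auto.
  apply (ent_diag X E HE).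
Qed.

Lemma ent_trans (X : ballean) (E F : rel X) : entourage X E -> entourage X F ->
  exists D, entourage X D /\ forall x y z, E x y -> F y z -> D x z.
Proof.
  intros HE HF. destruct (ent_inv X E HE) as [D1 [HD1 H1]].
  destruct (ent_comp X F D1 HF HD1) as [D [HD HsD]].
  exists D; split; auto. intros x y z Hxy Hyz. apply HsD. exists y. split; [apply H1; exact Hxy | exact Hyz].
Qed.

Lemma bounded_image (X Y : ballean) (f : X -> Y) (P : Y -> Prop) E x0 :
  macro_uniform X Y f -> entourage X E ->
  (forall y, P y -> exists x, E x0 x /\ f x = y) -> bounded Y P.
Proof.
  intros Hm HE H. destruct (Hm E HE) as [EY [HEY HfE]].
  exists EY, (f x0). split; auto. intros y Py. destruct (H y Py) as [x [Hx <-]].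
  unfold ball. auto.
Qed.

Theorem proposition2p5 (X Y : ballean) (f : X -> Y) (s : Y -> X) :
  normal X ->
  macro_uniform X Y f ->
  open_map X Y f ->
  (forall y : Y, exists x : X, f x = y) ->
  bornologous Y X s ->
  (forall y : Y, f (s y) = y) ->
  normal Y.
Proof.
  intros Hn Hm Ho Hsurj Hb Hs A B HAB.
  set (sA := fun x => exists a, A a /\ s a = x).
  set (fB := fun x => B (f x)).
  assert (Hd : asym_disjoint X sA fB).
  { intros EX HEX. destruct (Hm EX HEX) as [EY [HEY HfE]].
    destruct (HAB EY HEY) as [E0 [y0 [HE0 HK]]].
    destruct (ent_inv Y EY HEY) as [Di [HDi HiD]].
    destruct (ent_trans Y E0 Di HE0 HDi) as [D [HD HtD]].
    destruct (Hb (ball Y D y0)) as [E1 [x1 [HE1 HB1]]].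
    { exists D, y0. split; auto. intros y Hy; exact Hy. }
    destruct (ent_trans X E1 EX HE1 HEX) as [D2 [HD2 HtD2]].
    exists D2, x1. split; auto.
    intros z [[a' [[a [Ha <-]] Haz]] [b' [Hb' Hbz]]].
    assert (Hfz : E0 y0 (f z)).
    { apply HK. split.
      - exists a. split; auto. rewrite <- (Hs a). auto.
      - exists (f b'). split; auto. }
    assert (Hay : D y0 a).
    { apply HtD with (f z); auto. apply HiD. rewrite <- (Hs a). auto. }
    assert (Hsa : E1 x1 (s a)).
    { apply HB1. exists a. split; auto. }
    unfold ball. eauto. }
  destruct (Hn sA fB Hd) as [U' [V' [HU' [HV' HUV]]]].
  exists (fun y => exists x, U' x /\ f x = y).
  exists (fun y => forall x, f x = y -> V' x).
  split; [|split].
  - intros EY HEY. destruct (Ho EY HEY) as [EX [HEX Hlift]].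
    destruct (HU' EX HEX) as [E0 [x0 [HE0 HK]]].
    apply (bounded_image X Y f _ E0 x0 Hm HE0).
    intros y [[a [Ha Hay]] HnU].
    rewrite <- (Hs a) in Hay. destruct (Hlift (s a) y Hay) as [x' [Hx' Hfx']].
    exists x'. split; auto. apply HK. split.
    + exists (s a). split; auto. exists a; auto.
    + intro Hu. apply HnU. eauto.
  - intros EY HEY.
    destruct (ent_inv Y EY HEY) as [Di [HDi HiD]].
    destruct (Ho Di HDi) as [EX [HEX Hlift]].
    destruct (ent_inv X EX HEX) as [Ei [HEi HiE]].
    destruct (HV' Ei HEi) as [E0 [x0 [HE0 HK]]].
    apply (bounded_image X Y f _ E0 x0 Hm HE0).
    intros y [[b [Hb0 Hby]] HnV].
    destruct (not_all_ex_not _ _ HnV) as [x Hx].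
    destruct (imply_to_and _ _ Hx) as [Hfx HnVx].
    exists x. split; auto. apply HK. split; auto.
    subst y. destruct (Hlift x b (HiD _ _ Hby)) as [z [Hxz Hfz]].
    exists z. split; auto. unfold fB. rewrite Hfz. auto.
  - intros y [[x [HUx Hfx]] HV]. apply (HUV x). split; auto.
Qed.
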